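(* Let $\mathcal H$ be a separable complex Hilbert space, $A_1,A_2\in L(\mathcal H)^+$, $B\in L(\mathcal H)$ with closed range. The following are equivalent: (1) there exists $G\in L(\mathcal H)$ with $BG\in\Pi(A_1,R(B))$ and $I-GB\in\Pi(A_2,N(B))$; (2) the pairs $(A_1,R(B))$ and $(A_2,N(B))$ are compatible; (3) $B$ admits a weighted generalized inverse, i.e. there exists $C\in L(\mathcal H)$ with $BCB=B$, $CBC=C$, $A_1BC=(BC)^*A_1$, $A_2CB=(CB)^*A_2$.
   Context: For $A\in L(\mathcal H)^+$ and a closed subspace $\mathcal S$, $\|z\|_A=\langle Az,z\rangle^{1/2}$ and $\Pi(A,\mathcal S)$ is the set of $T\in L(\mathcal H)$ with $R(T)\subseteq\mathcal S$ and $\|y-Ty\|_A\le\|y-s\|_A$ for all $y\in\mathcal H$, $s\in\mathcal S$. The pair $(A,\mathcal S)$ is compatible if there exists $Q\in L(\mathcal H)$ with $Q^2=Q$, $R(Q)=\mathcal S$, $AQ=Q^*A$. $N(\cdot)$ denotes nullspace. *)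

(* Defs.v *)
From mathcomp Require Import all_boot all_algebra complex.
From mathcomp Require Import reals.
Set Implicit Arguments. Unset Strict Implicit. Unset Printing Implicit Defensive.
Import GRing.Theory Num.Theory.
Local Open Scope ring_scope.

Section Hilbert.
Variables (R : realType) (V : lmodType R[i]) (ip : V -> V -> R[i]).

Definition nsq (x : V) : R[i] := ip x x.

Definition cauchy_seq (u : nat -> V) : Prop :=
  forall e : R[i], 0 < e -> exists N : nat, forall m n : nat,
    (N <= m)%N -> (N <= n)%N -> nsq (u m - u n) < e.
Definition converges_to (u : nat -> V) (l : V) : Prop :=
  forall e : R[i], 0 < e -> exists N : nat, forall n : nat,
    (N <= n)%N -> nsq (u n - l) < e.

Definition is_hilbert : Prop :=
  [/\ (forall (a : R[i]) (x y z : V), ip (a *: x + y) z = a * ip x z + ip y z),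
      (forall x y : V, ip y x = (ip x y)^*),
      (forall x : V, 0 <= ip x x),
      (forall x : V, ip x x = 0 -> x = 0) &
      (forall u : nat -> V, cauchy_seq u -> exists l, converges_to u l)].

Definition separable : Prop :=
  exists d : nat -> V, forall (x : V) (e : R[i]), 0 < e ->
    exists n : nat, nsq (x - d n) < e.

Definition bounded_op (T : V -> V) : Prop :=
  (forall (a : R[i]) (x y : V), T (a *: x + y) = a *: T x + T y) /\
  exists M : R[i], forall x : V, nsq (T x) <= M * nsq x.

Definition positive_op (A : V -> V) : Prop :=
  bounded_op A /\ forall x : V, 0 <= ip (A x) x.

Definition range_of (T : V -> V) : V -> Prop := fun y => exists x, T x = y.
Definition kernel_of (T : V -> V) : V -> Prop := fun x => T x = 0.

Definition closed_set (S : V -> Prop) : Prop :=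
  forall (u : nat -> V) (l : V), (forall n, S (u n)) -> converges_to u l -> S l.

Definition closed_range (T : V -> V) : Prop := closed_set (range_of T).

Definition Anorm (A : V -> V) (z : V) : R[i] := sqrtC (ip (A z) z).

(* X = Y^* Z written out: <X x, y> = <Z x, Y y> for all x, y
   (i.e. X = Y^* Z where Y^* is the Hilbert adjoint of Y). *)
Definition eq_adj_comp (X Y Z : V -> V) : Prop :=
  forall x y : V, ip (X x) y = ip (Z x) (Y y).

Definition Pi (A : V -> V) (S : V -> Prop) (T : V -> V) : Prop :=
  bounded_op T /\ (forall y, S (T y)) /\
  forall y s : V, S s -> Anorm A (y - T y) <= Anorm A (y - s).

Definition compatible (A : V -> V) (S : V -> Prop) : Prop :=
  exists Q : V -> V, [/\ bounded_op Q, (forall x, Q (Q x) = Q x),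
    (forall y, range_of Q y <-> S y) & eq_adj_comp (A \o Q) Q A].

End Hilbert.

(* Main.v *)
Require Import Defs.
From mathcomp Require Import all_boot all_algebra complex.
From mathcomp Require Import reals.
From mathcomp Require Import order.
From mathcomp Require Import ring lra.
Import Order.TTheory GRing.Theory Num.Theory.
Local Open Scope ring_scope.
Set Implicit Arguments. Unset Strict Implicit. Unset Printing Implicit Defensive.

Section Basic.
Variables (R : realType) (V : lmodType R[i]) (ip : V -> V -> R[i]).
Hypothesis hH : is_hilbert ip.
Local Notation "x %:C" := ((x : R)%:C)%C.

Lemma ipDZl a x y z : ip (a *: x + y) z = a * ip x z + ip y z.
Proof. by case: hH. Qed.
Lemma ipC x y : ip y x = (ip x y)^*.
Proof. by case: hH. Qed.
Lemma ip_ge0 x : 0 <= ip x x.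
Proof. by case: hH. Qed.
Lemma ip_eq0 x : ip x x = 0 -> x = 0.
Proof. by case: hH => _ _ _ H _; apply: H. Qed.

Lemma ip0l z : ip 0 z = 0.
Proof.
have := ipDZl 1 0 0 z; rewrite scaler0 addr0 mul1r => h.
by have := congr1 (fun t => t - ip 0 z) h; rewrite subrr addrK.
Qed.
Lemma ipDl x y z : ip (x + y) z = ip x z + ip y z.
Proof. by rewrite -[x]scale1r ipDZl mul1r scale1r. Qed.
Lemma ipZl a x z : ip (a *: x) z = a * ip x z.
Proof. by rewrite -[a *: x]addr0 ipDZl ip0l addr0. Qed.
Lemma ipNl x z : ip (- x) z = - ip x z.
Proof. by rewrite -scaleN1r ipZl mulN1r. Qed.
Lemma ipBl x y z : ip (x - y) z = ip x z - ip y z.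
Proof. by rewrite ipDl ipNl. Qed.
Lemma ip0r z : ip z 0 = 0.
Proof. by rewrite ipC ip0l conjC0. Qed.
Lemma ipDr x y z : ip z (x + y) = ip z x + ip z y.
Proof. by rewrite ipC ipDl rmorphD /= -!ipC. Qed.
Lemma ipZr a x z : ip z (a *: x) = a^* * ip z x.
Proof. by rewrite ipC ipZl rmorphM /= -ipC. Qed.
Lemma ipNr x z : ip z (- x) = - ip z x.
Proof. by rewrite ipC ipNl rmorphN /= -ipC. Qed.
Lemma ipBr x y z : ip z (x - y) = ip z x - ip z y.
Proof. by rewrite ipDr ipNr. Qed.

Lemma conjR (r : R) : (r%:C)^* = r%:C.
Proof. by apply: conj_Creal; rewrite complex_real. Qed.

Definition N x : R := complex.Re (ip x x).
Lemma ipxx x : ip x x = (N x)%:C.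
Proof. by rewrite /N RRe_real // ger0_real // ip_ge0. Qed.
Lemma N_ge0 x : 0 <= N x.
Proof. by have := ip_ge0 x; rewrite ipxx lecR. Qed.
Lemma N_eq0 x : N x = 0 -> x = 0.
Proof. by move=> h; apply: ip_eq0; rewrite ipxx h. Qed.
Lemma N0 : N 0 = 0.
Proof. by rewrite /N ip0l. Qed.

Definition rp x y : R := complex.Re (ip x y).

Lemma ReD (a b : R[i]) : complex.Re (a + b) = complex.Re a + complex.Re b.
Proof. by case: a; case: b. Qed.
Lemma ReN (a : R[i]) : complex.Re (- a) = - complex.Re a.
Proof. by case: a. Qed.
Lemma ReJ (a : R[i]) : complex.Re (a^*) = complex.Re a.
Proof. by case: a. Qed.
Lemma ReMr (r : R) (a : R[i]) : complex.Re (r%:C * a) = r * complex.Re a.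
Proof. by case: a => x y /=; rewrite mul0r subr0. Qed.

Lemma rpC x y : rp y x = rp x y.
Proof. by rewrite /rp ipC ReJ. Qed.
Lemma rpDl x y z : rp (x + y) z = rp x z + rp y z.
Proof. by rewrite /rp ipDl ReD. Qed.
Lemma rpNl x z : rp (- x) z = - rp x z.
Proof. by rewrite /rp ipNl ReN. Qed.
Lemma rpZl (r : R) x z : rp (r%:C *: x) z = r * rp x z.
Proof. by rewrite /rp ipZl ReMr. Qed.

Lemma N_add x y : N (x + y) = N x + N y + 2 * rp x y.
Proof.
rewrite /N /rp ipDl !ipDr !ReD [ip y x]ipC ReJ; ring.
Qed.
Lemma N_scale (r : R) x : N (r%:C *: x) = r ^+ 2 * N x.
Proof.
rewrite /N ipZl ipZr conjR mulrA -rmorphM ReMr; ring.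
Qed.
Lemma N_opp x : N (- x) = N x.
Proof. by rewrite /N ipNl ipNr opprK. Qed.
Lemma N_sub x y : N (x - y) = N (y - x).
Proof. by rewrite -N_opp opprB. Qed.

Lemma N_comb (a b : R) x y :
  N (a%:C *: x + b%:C *: y) = a ^+ 2 * N x + b ^+ 2 * N y + 2 * (a * b) * rp x y.
Proof.
rewrite N_add !N_scale rpZl rpC rpZl rpC; ring.
Qed.

Definition nn x : R := Num.sqrt (N x).
Lemma nn_ge0 x : 0 <= nn x. Proof. exact: sqrtr_ge0. Qed.
Lemma nn_sq x : nn x ^+ 2 = N x. Proof. by rewrite sqr_sqrtr // N_ge0. Qed.

Lemma cauchy_schwarz x y : rp x y <= nn x * nn y.
Proof.
have h := N_ge0 ((nn y)%:C *: x - (nn x)%:C *: y).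
rewrite -scaleNr -rmorphN N_comb !nn_sq in h.
have hx := nn_ge0 x; have hy := nn_ge0 y.
have [|nz] := boolP (nn x * nn y == 0).
  rewrite mulf_eq0 => /orP [] /eqP h0.
    rewrite h0 mul0r.
    have : x = 0 by apply: N_eq0; rewrite -nn_sq h0 expr0n.
    by move->; rewrite /rp ip0l.
  rewrite h0 mulr0.
  have : y = 0 by apply: N_eq0; rewrite -nn_sq h0 expr0n.
  by move->; rewrite /rp ip0r.
have pos : 0 < nn x * nn y by rewrite lt0r nz mulr_ge0.
have h2 : 0 <= (nn x * nn y) * (2 * (nn x * nn y) - 2 * rp x y).
  rewrite -[N x]nn_sq -[N y]nn_sq in h. nra.
nra.
Qed.

Lemma nn_triangle x y : nn (x + y) <= nn x + nn y.
Proof.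
have h : nn (x + y) ^+ 2 <= (nn x + nn y) ^+ 2.
  rewrite nn_sq N_add -!nn_sq; have := cauchy_schwarz x y; nra.
have := nn_ge0 (x + y); have := nn_ge0 x; have := nn_ge0 y; nra.
Qed.

Lemma sq_le (a b : R) : 0 <= a -> 0 <= b -> a ^+ 2 <= b ^+ 2 -> a <= b.
Proof. move=> ha hb h; nra. Qed.

Lemma nn0 : nn 0 = 0.
Proof. by rewrite /nn N0 sqrtr0. Qed.
Lemma nn_eq0 x : nn x = 0 -> x = 0.
Proof. by move=> h; apply: N_eq0; rewrite -nn_sq h expr0n. Qed.
Lemma nn_opp x : nn (- x) = nn x.
Proof. by rewrite /nn N_opp. Qed.
Lemma nn_sub x y : nn (x - y) = nn (y - x).
Proof. by rewrite /nn N_sub. Qed.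
Lemma nn_scale (r : R) x : nn (r%:C *: x) = `|r| * nn x.
Proof. by rewrite /nn N_scale sqrtrM ?sqr_ge0 // sqrtr_sqr. Qed.
Lemma nn_ltE x (r : R) : 0 <= r -> (nn x < r) <-> (N x < r ^+ 2).
Proof.
move=> r0; have h := nn_sq x; have h0 := nn_ge0 x; split => H; nra.
Qed.
Lemma nn_leE x (r : R) : 0 <= r -> (nn x <= r) <-> (N x <= r ^+ 2).
Proof.
move=> r0; have h := nn_sq x; have h0 := nn_ge0 x; split => H; nra.
Qed.
Lemma nn_tri3 x y z : nn (x - z) <= nn (x - y) + nn (y - z).
Proof. by have := nn_triangle (x - y) (y - z); rewrite addrA subrK. Qed.

Lemma RCM (a b : R) : (a * b)%:C = a%:C * b%:C.
Proof. by apply/eqP; rewrite eq_complex /= !mulr0 !mul0r subr0 addr0 !eqxx. Qed.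

Lemma cpos_real (e : R[i]) : 0 < e -> e = (complex.Re e)%:C /\ 0 < complex.Re e.
Proof.
move=> he; have er : e = (complex.Re e)%:C by rewrite RRe_real // gtr0_real.
by split => //; move: he; rewrite er ltcR.
Qed.

Lemma nsqE x : nsq ip x = (N x)%:C.
Proof. exact: ipxx. Qed.

Lemma conv_iff u l : converges_to ip u l <->
  (forall e : R, 0 < e -> exists N0 : nat, forall n, (N0 <= n)%N -> nn (u n - l) < e).
Proof.
split.
  move=> h e e0; have [|N0 hN] := h ((e ^+ 2)%:C); first by rewrite ltcR exprn_gt0.
  exists N0 => n /hN; rewrite nsqE ltcR => H; apply/nn_ltE => //; exact: ltW.
move=> h e e0; have [er e0'] := cpos_real e0.
move: er e0'; set r := complex.Re e => er e0'.
have [N0 hN] : exists N0 : nat, forall n, (N0 <= n)%N -> nn (u n - l) < Num.sqrt r.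
  by apply: h; rewrite sqrtr_gt0.
exists N0 => n /hN H; rewrite nsqE er ltcR.
by have := (nn_ltE _ (sqrtr_ge0 r)).1 H; rewrite sqr_sqrtr // ltW.
Qed.

Lemma cauchy_iff u : cauchy_seq ip u <->
  (forall e : R, 0 < e -> exists N0 : nat, forall m n, (N0 <= m)%N -> (N0 <= n)%N -> nn (u m - u n) < e).
Proof.
split.
  move=> h e e0; have [|N0 hN] := h ((e ^+ 2)%:C); first by rewrite ltcR exprn_gt0.
  exists N0 => m n hm hn; have := hN m n hm hn.
  rewrite nsqE ltcR => H; apply/nn_ltE => //; exact: ltW.
move=> h e e0; have [er e0'] := cpos_real e0.
move: er e0'; set r := complex.Re e => er e0'.
have [N0 hN] : exists N0 : nat, forall m n, (N0 <= m)%N -> (N0 <= n)%N -> nn (u m - u n) < Num.sqrt r.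
  by apply: h; rewrite sqrtr_gt0.
exists N0 => m n hm hn; have H := hN m n hm hn; rewrite nsqE er ltcR.
by have := (nn_ltE _ (sqrtr_ge0 r)).1 H; rewrite sqr_sqrtr // ltW.
Qed.

Lemma complete_nn u :
  (forall e : R, 0 < e -> exists N0 : nat, forall m n, (N0 <= m)%N -> (N0 <= n)%N -> nn (u m - u n) < e) ->
  exists l, forall e : R, 0 < e -> exists N0 : nat, forall n, (N0 <= n)%N -> nn (u n - l) < e.
Proof.
move=> /cauchy_iff hc; case: hH => _ _ _ _ hcomp.
by have [l /conv_iff hl] := hcomp u hc; exists l.
Qed.

Definition lin (T : V -> V) := forall a x y, T (a *: x + y) = a *: T x + T y.

Lemma bounded_nn T : bounded_op ip T -> lin T /\ exists K : R, 0 <= K /\ forall x, nn (T x) <= K * nn x.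
Proof.
case=> hl [M hM]; split => //.
pose m : R := complex.Re `|M|.
have m0 : 0 <= m.
  rewrite /m -ler0c RRe_real ?normr_ge0 // ger0_real //.
have hm : forall x, N (T x) <= m * N x.
  move=> x; have := hM x; rewrite !nsqE => h.
  have h0 : 0 <= M * (N x)%:C by apply: le_trans h; rewrite lecR N_ge0.
  have : M * (N x)%:C = (m * N x)%:C.
    rewrite -[LHS]ger0_norm // normrM [`|(N x)%:C|]ger0_norm ?lecR ?N_ge0 //.
    by rewrite RCM /m (@RRe_real _ `|M|) // ger0_real.
  by move=> e; move: h; rewrite e lecR.
exists (Num.sqrt m); split; first exact: sqrtr_ge0.
move=> x; have := hm x; rewrite -!nn_sq => h.
apply: sq_le; [exact: nn_ge0| by rewrite mulr_ge0 ?sqrtr_ge0 ?nn_ge0|].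
by rewrite exprMn (sqr_sqrtr m0).
Qed.

Lemma bounded_of T : lin T -> (exists K : R, forall x, N (T x) <= K * N x) -> bounded_op ip T.
Proof.
move=> hl [K hK]; split => //; exists K%:C => x.
by rewrite !nsqE -RCM lecR.
Qed.


Section LinOp.
Variable T : V -> V.
Hypothesis hT : lin T.
Lemma lin0 : T 0 = 0.
Proof.
have := hT 1 0 0; rewrite scaler0 addr0 scale1r => h.
by have := congr1 (fun t => t - T 0) h; rewrite subrr addrK.
Qed.
Lemma linD x y : T (x + y) = T x + T y.
Proof. by rewrite -[x]scale1r (hT 1 x y) !scale1r. Qed.
Lemma linZ a x : T (a *: x) = a *: T x.
Proof. by rewrite -[a *: x]addr0 (hT a x 0) lin0 addr0. Qed.
Lemma linN x : T (- x) = - T x.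
Proof. by rewrite -scaleN1r linZ scaleN1r. Qed.
Lemma linB x y : T (x - y) = T x - T y.
Proof. by rewrite linD linN. Qed.
End LinOp.

Lemma herm A : lin A -> (forall x, 0 <= ip (A x) x) ->
  forall x y, ip (A y) x = (ip (A x) y)^*.
Proof.
move=> hA hp x y.
have fr : forall w, (ip (A w) w)^* = ip (A w) w by move=> w; exact: geC0_conj.
set p := ip (A x) y; set q := ip (A y) x.
set fx := ip (A x) x; set fy := ip (A y) y.
have E1 : ip (A (x + y)) (x + y) = fx + fy + p + q.
  rewrite linD // !ipDl !ipDr /p /q /fx /fy; ring.
have E2 : ip (A (x + 'i *: y)) (x + 'i *: y) = fx + 'i^* * p + 'i * q + 'i * 'i^* * fy.
  rewrite linD // linZ // !ipDl !ipDr !ipZl !ipZr /p /q /fx /fy; ring.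
have C1 := fr (x + y); rewrite E1 !rmorphD /= fr fr in C1.
have C2 := fr (x + 'i *: y); rewrite E2 !rmorphD !rmorphM /= conjCK fr in C2.
rewrite -/fx -/fy in C1 C2.
rewrite conjCi in C2.
have key : 2%:R * 'i * (q - p^*) = 0.
  have e1 : p^* + q^* - (p + q) = 0.
    by rewrite -(subrr (fx + fy + p + q)); rewrite -{1}C1; ring.
  have e2 : ('i * p^* + (- 'i) * q^*) - ((- 'i) * p + 'i * q) = 0.
    rewrite -(subrr (fx + - 'i * p + 'i * q + 'i * - 'i * fy)); rewrite -{1}C2.
    have hfy : fy^* = fy := fr y. rewrite hfy; ring.
  have -> : 2%:R * 'i * (q - p^*) = - ('i * (p^* + q^* - (p + q))) - (('i * p^* + (- 'i) * q^*) - ((- 'i) * p + 'i * q)).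
    ring.
  by rewrite e1 e2 mulr0 oppr0 addr0.
apply/eqP; rewrite -subr_eq0; apply/eqP.
move: key => /eqP; rewrite !mulf_eq0 (negbTE (neq0Ci _)) pnatr_eq0 /= => /eqP //.
Qed.

Lemma decomp A P : lin A -> eq_adj_comp ip (A \o P) P A ->
  forall u w, P u = 0 -> P w = w -> ip (A (u + w)) (u + w) = ip (A u) u + ip (A w) w.
Proof.
move=> hA adj u w hu hw.
have c1 : ip (A u) w = 0 by rewrite -{1}hw -adj /= hu lin0 // ip0l.
have c2 : ip (A w) u = 0 by rewrite -hw adj /= hu ip0r.
by rewrite linD // !ipDl !ipDr c1 c2 addr0 add0r.
Qed.

Lemma anorm_le A P : positive_op ip A -> eq_adj_comp ip (A \o P) P A ->
  forall u w, P u = 0 -> P w = w -> Anorm ip A u <= Anorm ip A (u + w).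
Proof.
move=> [[hA _] hp] adj u w hu hw; rewrite /Anorm (decomp hA adj hu hw).
by rewrite ler_sqrtC ?nnegrE ?addr_ge0 ?hp // lerDl hp.
Qed.

Lemma anorm_le_inv A u v : positive_op ip A -> Anorm ip A u <= Anorm ip A v ->
  ip (A u) u <= ip (A v) v.
Proof.
by move=> [_ hp]; rewrite /Anorm ler_sqrtC ?nnegrE ?hp.
Qed.

Lemma var_orth A T (S : V -> Prop) y s : positive_op ip A -> Pi ip A S T ->
  (forall y s t, S s -> S (T y + t *: s)) -> S s -> ip (A (y - T y)) s = 0.
Proof.
move=> hpos [_ [_ hmin]] hS Ss.
have [[hA _] hp] := hpos.
set u := y - T y; set a := ip (A u) s.
have ha' : ip (A s) u = a^* by apply: herm.
have c0 : 0 <= ip (A s) s := hp s.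
set Cr := complex.Re (ip (A s) s).
have hc : ip (A s) s = Cr%:C by rewrite /Cr RRe_real // ger0_real.
have Cr0 : 0 <= Cr by rewrite -ler0c -hc.
have aa0 : 0 <= a * a^* by exact: mul_conjC_ge0.
set P := complex.Re (a * a^*).
have hP : a * a^* = P%:C by rewrite /P RRe_real // ger0_real.
have P0 : 0 <= P by rewrite -ler0c -hP.
set k := (Cr + 1)^-1.
have k0 : 0 < k by rewrite invr_gt0 ltr_wpDl.
have hk : k * (Cr + 1) = 1 by rewrite mulVf // gt_eqF // ltr_wpDl.
set t := a * k%:C.
have := hmin y (T y + t *: s) (hS y s t Ss).
move/(anorm_le_inv hpos).
have -> : y - (T y + t *: s) = u - t *: s by rewrite /u opprD addrA.
rewrite -/u; clearbody u.
have E : ip (A (u - t *: s)) (u - t *: s) = ip (A u) u + (a * a^*) * (- 2%:R * k%:C + k%:C ^+ 2 * Cr%:C).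
  rewrite linB // linZ // !ipBl !ipBr !ipZl !ipZr -/a ha' -hc /t rmorphM /= conjR.
  ring.
rewrite E hP lerDl.
have -> : P%:C * (- 2%:R * k%:C + k%:C ^+ 2 * Cr%:C) = (P * (- 2%:R * k + k ^+ 2 * Cr))%:C.
  by rewrite !(rmorphM, rmorphD, rmorphN, rmorphXn, rmorph_nat).
rewrite ler0c => H.
have hkc : k * Cr = 1 - k.
  by rewrite -[X in _ = X - _]hk mulrDr mulr1 addrK.
have e : - 2%:R * k + k ^+ 2 * Cr = - (k + k ^+ 2).
  by rewrite expr2 -mulrA hkc; ring.
rewrite e mulrN oppr_ge0 in H.
have kk : 0 < k + k ^+ 2 by rewrite ltr_wpDr // exprn_ge0 // ltW.
have Pz : P = 0.
  apply/eqP; rewrite eq_le P0 andbT; nra.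
by move: hP; rewrite Pz => /eqP; rewrite mulf_eq0 conjC_eq0 orbb => /eqP.
Qed.

Lemma anorm_le2 A P : positive_op ip A -> eq_adj_comp ip (A \o P) P A ->
  forall u w, P u = 0 -> P w = w -> Anorm ip A w <= Anorm ip A (u + w).
Proof.
move=> [[hA _] hp] adj u w hu hw; rewrite /Anorm (decomp hA adj hu hw).
by rewrite ler_sqrtC ?nnegrE ?addr_ge0 ?hp // lerDr hp.
Qed.

Lemma bounded_of_nn T : lin T -> (exists K : R, 0 <= K /\ forall x, nn (T x) <= K * nn x) -> bounded_op ip T.
Proof.
move=> hl [K [K0 hK]]; apply: bounded_of => //; exists (K ^+ 2) => x.
rewrite -!nn_sq -exprMn; have := hK x; have := nn_ge0 (T x); have := nn_ge0 x.
move=> h1 h2 h3; nra.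
Qed.

Lemma bounded_comp T1 T2 : bounded_op ip T1 -> bounded_op ip T2 -> bounded_op ip (T1 \o T2).
Proof.
move=> /bounded_nn [l1 [K1 [K10 h1]]] /bounded_nn [l2 [K2 [K20 h2]]].
apply: bounded_of_nn.
  by move=> a x y /=; rewrite (l2 a x y) (l1 a (T2 x) (T2 y)).
exists (K1 * K2); split; first exact: mulr_ge0.
move=> x /=; apply: le_trans (h1 _) _; rewrite -mulrA ler_wpM2l //.
Qed.

Lemma bounded_sub T : bounded_op ip T -> bounded_op ip (fun x => x - T x).
Proof.
move=> /bounded_nn [l [K [K0 h]]].
apply: bounded_of_nn.
  by move=> a x y /=; rewrite (l a x y) scalerBr opprD addrACA.
exists (1 + K); split; first by rewrite addr_ge0.
move=> x; apply: le_trans (nn_triangle _ _) _; rewrite nn_opp mulrDl mul1r lerD2l //.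
Qed.
End Basic.

From Stdlib Require Import Classical ClassicalEpsilon.
Lemma grp (U : zmodType) (a b c d : U) : a - (b - c) = (d + a - b) - (d - c).
Proof. by rewrite -[d + a - b]addrA [d + (a - b)]addrC addrKA opprK opprB addrAC -addrA. Qed.

Lemma grp2 (U : zmodType) (a b c d : U) : a - b - (c - d) = (a - c) - (b - d).
Proof. by rewrite !opprB [d - c]addrC [d - b]addrC addrACA. Qed.

Lemma geo (R : realType) (a e : R) : 0 < e -> exists N : nat, a * (2^-1) ^+ N < e.
Proof.
move=> e0; have [a0|a0] := lerP a 0.
  exists 0%N; rewrite expr0 mulr1; exact: le_lt_trans a0 e0.
have ae0 : 0 <= a / e by rewrite divr_ge0 // ltW.
have hb := archi_boundP ae0; set b := Num.Def.archi_bound (a / e) in hb.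
exists b.
have h2 : (b%:R : R) < 2 ^+ b.
  by rewrite -natrX ltr_nat ltn_expl.
have t0 : (0 : R) < 2 ^+ b by rewrite exprn_gt0.
rewrite exprVn ltr_pdivrMr //.
rewrite ltr_pdivrMr // in hb.
nra.
Qed.

Section OM.
Variables (R : realType) (V : lmodType R[i]) (ip : V -> V -> R[i]).
Hypothesis hH : is_hilbert ip.
Variable B : V -> V.
Hypothesis lB : lin B.
Variable KB : R.
Hypothesis KB0 : 0 <= KB.
Hypothesis hKB : forall x, nn ip (B x) <= KB * nn ip x.
Hypothesis hcl : closed_set ip (range_of B).

Local Notation nn := (nn ip).
Local Notation Y := (range_of B).

Let tri := nn_triangle hH.
Let tri3 := nn_tri3 hH.
Let nnsub := nn_sub hH.
Let nnopp := nn_opp hH.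

Lemma Y0 : Y 0. Proof. by exists 0; rewrite (lin0 lB). Qed.
Lemma YD y z : Y y -> Y z -> Y (y + z).
Proof. by move=> [a <-] [b <-]; exists (a + b); rewrite (linD lB). Qed.
Lemma YZ c y : Y y -> Y (c *: y).
Proof. by move=> [a <-]; exists (c *: a); rewrite (linZ lB). Qed.
Lemma YN y : Y y -> Y (- y).
Proof. by move=> h; rewrite -scaleN1r; apply: YZ. Qed.

Lemma Yclosed u l : (forall n, Y (u n)) ->
  (forall e : R, 0 < e -> exists N0 : nat, forall n, (N0 <= n)%N -> nn (u n - l) < e) -> Y l.
Proof. by move=> hu hc; apply: (hcl hu); apply/(conv_iff hH). Qed.

Lemma stepA : exists (m : nat) y0 r, [/\ Y y0, 0 < r &
  forall z, Y z -> nn (z - y0) < r -> forall e : R, 0 < e ->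
     exists x, nn x <= m%:R /\ nn (z - B x) < e].
Proof.
apply: NNPP => hneg.
have H : forall (m : nat) y0 r, Y y0 -> 0 < r -> exists z (e : R),
    [/\ Y z, nn (z - y0) < r, 0 < e & forall x, nn x <= m%:R -> e <= nn (z - B x)].
  move=> m y0 r hy r0; apply: NNPP => hno; apply: hneg; exists m, y0, r; split => //.
  move=> z hz hzr e e0; apply: NNPP => hnx; apply: hno; exists z, e; split => //.
  move=> x hx; rewrite leNgt; apply/negP => hlt; apply: hnx; exists x; split => //.
have Hs : forall (m : nat) (p : V * R), exists q : V * R, Y p.1 -> 0 < p.2 ->
    [/\ Y q.1, 0 < q.2, q.2 <= p.2 / 2%:R,
        (forall w, nn (w - q.1) <= q.2 -> nn (w - p.1) < p.2) &
        (forall w, nn (w - q.1) <= q.2 -> forall x, nn x <= m%:R -> w <> B x)].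
  move=> m [y0 r]; case: (classic (Y y0 /\ 0 < r)) => [[hy r0]|hn]; last first.
    by exists (y0, r) => a b; exfalso; apply: hn.
  have r20 : 0 < r / 2%:R by rewrite divr_gt0.
  have [z [e [hz hzr e0 he]]] := H m y0 (r / 2%:R) hy r20.
  exists (z, Num.min (r / 4%:R) (e / 2%:R)) => _ _ /=.
  have hmin1 : Num.min (r / 4%:R) (e / 2%:R) <= r / 4%:R by rewrite ge_min lexx.
  have hmin2 : Num.min (r / 4%:R) (e / 2%:R) <= e / 2%:R by rewrite ge_min lexx orbT.
  split => //.
  - by rewrite lt_min !divr_gt0.
  - by apply: le_trans hmin1 _; rewrite ler_pM2l // lef_pV2 ?posrE // ler_nat.
  - move=> w hw; apply: le_lt_trans (tri3 w z y0) _.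
    have : nn (w - z) <= r / 4%:R := le_trans hw hmin1.
    move: hzr; lra.
  - move=> w hw x hx hwx; have := he x hx; rewrite -hwx nnsub.
    have := le_trans hw hmin2; lra.
have [step hstep] : exists step : nat -> V * R -> V * R, forall m p,
    Y p.1 -> 0 < p.2 ->
    [/\ Y (step m p).1, 0 < (step m p).2, (step m p).2 <= p.2 / 2%:R,
        (forall w, nn (w - (step m p).1) <= (step m p).2 -> nn (w - p.1) < p.2) &
        (forall w, nn (w - (step m p).1) <= (step m p).2 -> forall x, nn x <= m%:R -> w <> B x)].
  exists (fun m p => proj1_sig (constructive_indefinite_description _ (Hs m p))).
  by move=> m p; case: (constructive_indefinite_description _ (Hs m p)).
pose s := fix s (k : nat) : V * R := match k with 0%N => (0, 1) | k'.+1 => step k' (s k') end.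
have sS : forall k, s k.+1 = step k (s k) by [].
have inv : forall k, [/\ Y (s k).1, 0 < (s k).2 & (s k).2 <= (2^-1) ^+ k].
  elim=> [|k [h1 h2 h3]]; first by split => //=; exact: Y0.
  have [a1 a2 a3 _ _] := hstep k (s k) h1 h2.
  rewrite sS; split => //; apply: le_trans a3 _; rewrite exprS [X in _ <= X]mulrC ler_wpM2r //.
  by rewrite invr_ge0 ler0n.
pose y k := (s k).1; pose r k := (s k).2.
have nest : forall k d w, nn (w - y (k + d)%N) <= r (k + d)%N -> nn (w - y k) <= r k.
  move=> k; elim=> [|d IH] w; first by rewrite addn0.
  move=> hw; apply: IH; rewrite addnS in hw.
  have [h1 h2 _] := inv (k + d)%N.
  have [_ _ _ a4 _] := hstep (k + d)%N (s (k + d)%N) h1 h2.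
  by apply: ltW; apply: a4.
have nest2 : forall k n, (k <= n)%N -> nn (y n - y k) <= r k.
  move=> k n kn; rewrite -(subnKC kn); apply: (nest k (n - k)%N).
  by rewrite subrr (nn0 hH); have [_ /ltW ? _] := inv (k + (n - k))%N.
have [l hl] : exists l, forall e : R, 0 < e -> exists N0 : nat, forall n, (N0 <= n)%N -> nn (y n - l) < e.
  apply: (complete_nn hH) => e e0.
  have [N hN] := geo 2%:R e0.
  exists N => m n hm hn; apply: le_lt_trans (tri3 _ (y N) _) _.
  rewrite [nn (y N - _)]nnsub; have := nest2 N m hm; have := nest2 N n hn.
  have [_ _ h3] := inv N; rewrite -/(r N) in h3 *; lra.
have Yl : Y l by apply: (Yclosed (u := y)) => // n; have [] := inv n.
have ball : forall k, nn (l - y k) <= r k.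
  move=> k; apply/ler_addgt0Pr => e e0.
  have [N hN] := hl e e0.
  apply: le_trans (tri3 _ (y (maxn N k)) _) _.
  rewrite nnsub; have := hN (maxn N k) (leq_maxl _ _).
  have := nest2 k (maxn N k) (leq_maxr _ _); lra.
case: Yl => xs hxs.
have hb := archi_boundP (nn_ge0 ip xs); set b := Num.Def.archi_bound (nn xs) in hb.
have [h1 h2 _] := inv b.
have [_ _ _ _ a5] := hstep b (s b) h1 h2.
by apply: (a5 l (ball b.+1) xs (ltW hb)).
Qed.

Local Notation "x %:C" := ((x : R)%:C)%C.

Lemma scaleVK (a : R) (w : V) : a != 0 -> (a^-1)%:C *: (a%:C *: w) = w.
Proof.
move=> a0; rewrite scalerA -RCM mulVf //.
have -> : (1 : R)%:C = 1 by []. by rewrite scale1r.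
Qed.

Lemma nn_subr a b : nn (a - b) <= nn a + nn b.
Proof. by apply: le_trans (tri _ _) _; rewrite nnopp. Qed.

Lemma stepC : exists c : R, 0 <= c /\ forall w, Y w ->
  exists x, nn x <= c * nn w /\ nn (w - B x) <= nn w / 2%:R.
Proof.
have [m [y0 [r [hy0 r0 hA]]]] := stepA.
have hB : forall w, Y w -> nn w < r -> forall e : R, 0 < e ->
    exists x, nn x <= 2%:R * m%:R /\ nn (w - B x) < e.
  move=> w hw hwr e e0.
  have e20 : 0 < e / 2%:R by rewrite divr_gt0.
  have q1 : nn (y0 + w - y0) < r by rewrite addrAC subrr add0r.
  have q2 : nn (y0 - y0) < r by rewrite subrr (nn0 hH).
  have [x1 [hx1 h1]] := hA (y0 + w) (YD hy0 hw) q1 _ e20.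
  have [x2 [hx2 h2]] := hA y0 hy0 q2 _ e20.
  exists (x1 - x2); split.
    by apply: le_trans (nn_subr _ _) _; lra.
  have -> : w - B (x1 - x2) = (y0 + w - B x1) - (y0 - B x2).
    by rewrite (linB lB) (grp _ _ _ y0).
  by apply: le_lt_trans (nn_subr _ _) _; lra.
exists (4%:R * m%:R / r); split.
  by apply: divr_ge0; [apply: mulr_ge0 | apply: ltW].
move=> w hw; have [w0|wn0] := eqVneq w 0.
  by exists 0; rewrite w0 (nn0 hH) mulr0 sub0r nnopp (lin0 lB) (nn0 hH) mul0r.
have nw0 : 0 < nn w.
  by rewrite lt0r nn_ge0 andbT; apply/eqP => /(nn_eq0 hH); apply/eqP.
pose lam := r / (2%:R * nn w).
have lam0 : 0 < lam by rewrite /lam divr_gt0 // mulr_gt0.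
have hlw : nn (lam%:C *: w) = r / 2%:R.
  rewrite (nn_scale hH) ger0_norm ?ltW // /lam; field; exact: lt0r_neq0.
have q1 : nn (lam%:C *: w) < r by rewrite hlw; lra.
have q2 : 0 < r / 4%:R by rewrite divr_gt0.
have [x [hx hxe]] := hB (lam%:C *: w) (YZ _ hw) q1 (r / 4%:R) q2.
exists ((lam^-1)%:C *: x); split.
  rewrite (nn_scale hH) ger0_norm; last by rewrite invr_ge0 ltW.
  have -> : 4%:R * m%:R / r * nn w = lam^-1 * (2%:R * m%:R).
    rewrite /lam invf_div; field; do ?split; apply: lt0r_neq0 => //.
  by apply: ler_wpM2l => //; rewrite invr_ge0 ltW.
have -> : w - B ((lam^-1)%:C *: x) = (lam^-1)%:C *: (lam%:C *: w - B x).
  by rewrite (linZ lB) scalerBr scaleVK // lt0r_neq0.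
rewrite (nn_scale hH) ger0_norm; last by rewrite invr_ge0 ltW.
have -> : nn w / 2%:R = lam^-1 * (r / 4%:R).
  rewrite /lam invf_div; field; do ?split; apply: lt0r_neq0 => //.
by apply: ler_wpM2l; [rewrite invr_ge0 ltW | apply: ltW].
Qed.

Lemma le0_small (a K : R) : 0 <= K -> (forall e : R, 0 < e -> a <= K * e) -> a <= 0.
Proof.
move=> K0 h; apply/ler_addgt0Pr => e e0; rewrite add0r.
have e1 : 0 < e / (K + 1) by rewrite divr_gt0 // ltr_wpDl.
apply: le_trans (h _ e1) _.
rewrite mulrA ler_pdivrMr ?ltr_wpDl //; nra.
Qed.

Lemma qmono (k n : nat) : (k <= n)%N -> (2^-1 : R) ^+ n <= (2^-1) ^+ k.
Proof.
move=> kn; apply: ler_wiXn2l => //; first by rewrite invr_ge0.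
by rewrite invf_le1 // ler1n.
Qed.

Lemma OM : exists K : R, 0 <= K /\ forall y, Y y -> exists x, B x = y /\ nn x <= K * nn y.
Proof.
have [c [c0 hc]] := stepC.
have [f hf] : exists f : V -> V, forall w, Y w ->
    nn (f w) <= c * nn w /\ nn (w - B (f w)) <= nn w / 2%:R.
  have H : forall w, exists x, Y w -> nn x <= c * nn w /\ nn (w - B x) <= nn w / 2%:R.
    move=> w; case: (classic (Y w)) => [hw|hn]; last by exists 0.
    by have [x hx] := hc w hw; exists x.
  exists (fun w => proj1_sig (constructive_indefinite_description _ (H w))).
  by move=> w; case: (constructive_indefinite_description _ (H w)) => x /=; apply.
exists (2%:R * c); split; first by rewrite mulr_ge0.
move=> y hy.
pose q k : R := (2^-1) ^+ k.
pose ys := fix ys (k : nat) : V := match k with 0%N => y | k'.+1 => ys k' - B (f (ys k')) end.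
pose xs := fix xs (k : nat) : V := match k with 0%N => 0 | k'.+1 => xs k' + f (ys k') end.
have inv : forall k, [/\ Y (ys k), nn (ys k) <= q k * nn y & B (xs k) = y - ys k].
  elim=> [|k [h1 h2 h3]] /=.
    by split; rewrite ?expr0 ?mul1r ?(lin0 lB) ?subrr.
  have [a1 a2] := hf _ h1.
  split.
  - by apply: YD => //; apply: YN; exists (f (ys k)).
  - apply: le_trans a2 _; rewrite /q exprS -/(q k) -mulrA [X in _ <= X]mulrC.
    by apply: ler_wpM2r => //; rewrite invr_ge0.
  - by rewrite (linD lB) h3 opprB addrA addrAC.
have fb : forall k, nn (f (ys k)) <= c * (q k * nn y).
  move=> k; have [h1 h2 _] := inv k; have [a1 _] := hf _ h1.
  by apply: le_trans a1 _; apply: ler_wpM2l.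
have qS : forall k, q k.+1 = q k / 2%:R by move=> k; rewrite /q exprS mulrC.
have S : forall k d, nn (xs (k + d)%N - xs k) <= 2%:R * c * nn y * (q k - q (k + d)%N).
  move=> k; elim=> [|d IH]; first by rewrite addn0 !subrr (nn0 hH) mulr0.
  rewrite addnS /= addrAC; apply: le_trans (tri _ _) _.
  rewrite qS.
  have -> : 2%:R * c * nn y * (q k - q (k + d)%N / 2%:R) =
     2%:R * c * nn y * (q k - q (k + d)%N) + c * (q (k + d)%N * nn y) by field.
  exact: lerD IH (fb _).
have q0 : forall k, 0 <= q k by move=> k; rewrite /q exprn_ge0 // invr_ge0.
have [x hx] : exists x, forall e : R, 0 < e -> exists N0 : nat, forall n, (N0 <= n)%N -> nn (xs n - x) < e.
  apply: (complete_nn hH) => e e0.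
  have [N hN] := geo (4%:R * c * nn y) e0.
  exists N => m n hm hn; apply: le_lt_trans (tri3 _ (xs N) _) _.
  have h1 := S N (m - N)%N; have h2 := S N (n - N)%N.
  rewrite subnKC // in h1; rewrite subnKC // in h2.
  rewrite [nn (xs N - _)]nnsub.
  have : 0 <= 2%:R * c * nn y * q m by rewrite !mulr_ge0 // ?nn_ge0.
  have : 0 <= 2%:R * c * nn y * q n by rewrite !mulr_ge0 // ?nn_ge0.
  move: hN; rewrite /q; set QN := (2^-1) ^+ N; move: h1 h2; rewrite /q -/QN.
  move=> h1 h2 hN; lra.
exists x; split.
  have h : nn (B x - y) <= 0.
    apply: (le0_small (K := KB + 1)); first by rewrite addr_ge0.
    move=> e e0; have [N1 h1] := hx e e0; have [N2 h2] := geo (nn y) e0.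
    set n := maxn N1 N2.
    have [_ hyn hbn] := inv n.
    have := h1 n (leq_maxl _ _); rewrite nnsub => hxn.
    have hqn := qmono (leq_maxr N1 N2); rewrite -/(q n) -/(q N2) in hqn.
    have e1 : B x - y = B (x - xs n) - ys n.
      by rewrite (linB lB) hbn opprB addrA [B x + _ - y]addrAC addrK.
    rewrite e1; apply: le_trans (nn_subr _ _) _.
    have hk := hKB (x - xs n).
    have : nn (ys n) <= e.
      apply: le_trans hyn _; apply: ltW; apply: le_lt_trans _ h2.
      by rewrite mulrC; apply: ler_wpM2l => //; exact: nn_ge0.
    have : KB * nn (x - xs n) <= KB * e by apply: ler_wpM2l => //; exact: ltW.
    lra.
  have := nn_ge0 ip (B x - y) => h0.
  have : nn (B x - y) = 0 by apply/eqP; rewrite eq_le h h0.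
  by move/(nn_eq0 hH)/eqP; rewrite subr_eq0 => /eqP.
apply/ler_addgt0Pr => e e0; have [N h1] := hx e e0.
have := h1 N (leqnn _); rewrite nnsub => hxn.
have hs := S 0%N N; rewrite add0n /= subr0 in hs.
have : nn x <= nn (x - xs N) + nn (xs N) by have := tri (x - xs N) (xs N); rewrite subrK.
have : 2%:R * c * nn y * (q 0%N - q N) <= 2%:R * c * nn y.
  rewrite /q expr0 -[X in _ <= X]mulr1; apply: ler_wpM2l.
    by rewrite !mulr_ge0 // nn_ge0.
  by rewrite gerDl oppr_le0 exprn_ge0 // invr_ge0.
lra.
Qed.

End OM.

Section Main.
Variables (R : realType) (V : lmodType R[i]) (ip : V -> V -> R[i]).
Hypothesis hH : is_hilbert ip.
Variables (A1 A2 B : V -> V).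
Hypotheses (hA1 : positive_op ip A1) (hA2 : positive_op ip A2) (hB : bounded_op ip B).

Let lB : lin B. Proof. by case: hB. Qed.
Let lA1 : lin A1. Proof. by case: hA1 => [[]]. Qed.
Let lA2 : lin A2. Proof. by case: hA2 => [[]]. Qed.

Definition P3 := exists C : V -> V, [/\ bounded_op ip C,
        (forall x, B (C (B x)) = B x),
        (forall x, C (B (C x)) = C x),
        eq_adj_comp ip (A1 \o (B \o C)) (B \o C) A1 &
        eq_adj_comp ip (A2 \o (C \o B)) (C \o B) A2].
Definition P1 := exists G : V -> V, [/\ bounded_op ip G,
        Pi ip A1 (range_of B) (B \o G) &
        Pi ip A2 (kernel_of B) (fun x => x - G (B x))].
Definition P2 := compatible ip A1 (range_of B) /\ compatible ip A2 (kernel_of B).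

Lemma L31 : P3 -> P1.
Proof.
move=> [C [bC h1 h2 adj1 adj2]].
have lC : lin C by case: bC.
exists C; split => //.
  split; first exact: (bounded_comp hH).
  split; first by move=> y; exists (C y).
  move=> y s [x <-].
  have -> : y - B x = (y - B (C y)) + (B (C y) - B x) by rewrite addrA subrK.
  apply: (anorm_le hH hA1 adj1) => /=.
    by rewrite linB // linB // h2 subrr.
  by rewrite linB // linB // h2 h1.
split; first by apply: (bounded_sub hH); apply: (bounded_comp hH).
split; first by move=> y; rewrite /kernel_of linB // h1 subrr.
move=> y s hs; rewrite /kernel_of in hs.
have -> : y - (y - C (B y)) = C (B y) by rewrite opprB addrC subrK.
have -> : y - s = (y - C (B y) - s) + C (B y) by rewrite addrAC subrK.
apply: (anorm_le2 hH hA2 adj2) => /=.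
  by rewrite !linB // hs (lin0 lC) h2 subrr subr0.
by rewrite h2.
Qed.

Lemma L32 : P3 -> P2.
Proof.
move=> [C [bC h1 h2 adj1 adj2]].
have lC : lin C by case: bC.
split.
  exists (B \o C); split => //.
  - exact: (bounded_comp hH).
  - by move=> x /=; rewrite h2.
  - move=> y; split; first by move=> [x <-]; exists (C x).
    by move=> [x <-]; exists (B x) => /=; rewrite h1.
exists (fun x => x - C (B x)); split => //.
- by apply: (bounded_sub hH); apply: (bounded_comp hH).
- by move=> x /=; rewrite (linB lB) (linB lC) h2 subrr subr0.
- move=> y; split; first by move=> [x <-]; rewrite /kernel_of (linB lB) h1 subrr.
  by rewrite /kernel_of => hy; exists y; rewrite hy (lin0 lC) subr0.
- move=> x y /=; rewrite (linB lA2) (ipBl hH) (ipBr hH); congr (_ - _).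
  exact: adj2 x y.
Qed.

Lemma L13 : P1 -> P3.
Proof.
move=> [G [bG Pi1 Pi2]].
have lG : lin G by case: bG.
have hA1h := herm hH lA1 (proj2 hA1).
have hA2h := herm hH lA2 (proj2 hA2).
have bgb : forall x, B (G (B x)) = B x.
  move=> x; have [_ [h _]] := Pi2; have := h x; rewrite /kernel_of (linB lB).
  by move/eqP; rewrite subr_eq0 => /eqP.
exists (fun x => G (B (G x))); split.
- by apply: (bounded_comp hH) => //; apply: (bounded_comp hH).
- by move=> x; rewrite bgb bgb.
- by move=> x; rewrite bgb bgb.
- have o1 : forall y s, range_of B s -> ip (A1 (y - B (G y))) s = 0.
    move=> y s hs; have := var_orth hH y (s := s) hA1 Pi1; apply => //.
    move=> y' s' t [x <-]; exists (G y' + t *: x) => /=.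
    by rewrite (linD lB) (linZ lB).
  move=> x y /=; rewrite !bgb.
  have e1 : ip (A1 x) (B (G y)) = ip (A1 (B (G x))) (B (G y)).
    have := o1 x (B (G y)) (ex_intro _ _ erefl).
    by rewrite (linB lA1) (ipBl hH) => /eqP; rewrite subr_eq0 => /eqP.
  have e2 : ip (A1 (B (G x))) y = ip (A1 (B (G x))) (B (G y)).
    have := o1 y (B (G x)) (ex_intro _ _ erefl).
    by rewrite hA1h => /eqP; rewrite conjC_eq0 (ipBr hH) subr_eq0 => /eqP.
  by rewrite e1 e2.
- have o2 : forall y s, kernel_of B s -> ip (A2 (G (B y))) s = 0.
    move=> y s hs; have := var_orth hH y (s := s) hA2 Pi2.
    rewrite opprB addrC subrK; apply => //.
    move=> y' s' t hs'; rewrite /kernel_of (linD lB) (linZ lB) hs' scaler0 addr0.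
    by rewrite (linB lB) bgb subrr.
  move=> x y /=; rewrite !bgb.
  have kb : forall z, kernel_of B (z - G (B z)).
    by move=> z; rewrite /kernel_of (linB lB) bgb subrr.
  have e1 : ip (A2 (G (B x))) y = ip (A2 (G (B x))) (G (B y)).
    by have := o2 x _ (kb y); rewrite (ipBr hH) => /eqP; rewrite subr_eq0 => /eqP.
  have e2 : ip (A2 x) (G (B y)) = ip (A2 (G (B x))) (G (B y)).
    have := o2 y _ (kb x); rewrite hA2h => /eqP; rewrite conjC_eq0 (linB lA2) (ipBl hH).
    by rewrite subr_eq0 => /eqP.
  by rewrite e1 e2.
Qed.

Lemma L23 : closed_range ip B -> P2 -> P3.
Proof.
move=> hBcl [[Q1 [bQ1 idQ1 rQ1 adjQ1]] [Q2 [bQ2 idQ2 rQ2 adjQ2]]].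
have [lQ1 [K1 [K10 hK1]]] := bounded_nn hH bQ1.
have [lQ2 [K2 [K20 hK2]]] := bounded_nn hH bQ2.
have [_ [KB [KB0 hKB]]] := bounded_nn hH hB.
have [K [K0 hOM]] := OM hH lB KB0 hKB hBcl.
have [f hf] : exists f : V -> V, forall y, B (f y) = Q1 y /\ nn ip (f y) <= K * nn ip (Q1 y).
  have H : forall y, exists x, B x = Q1 y /\ nn ip x <= K * nn ip (Q1 y).
    by move=> y; apply: hOM; apply/rQ1; exists y.
  exists (fun y => proj1_sig (constructive_indefinite_description _ (H y))).
  by move=> y; case: (constructive_indefinite_description _ (H y)).
have BQ2 : forall z, B (Q2 z) = 0 by move=> z; apply/rQ2; exists z.
have Q1B : forall x, Q1 (B x) = B x.
  by move=> x; have [z <-] : range_of Q1 (B x) by apply/rQ1; exists x.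
have uniq : forall x x', B x = B x' -> x - Q2 x = x' - Q2 x'.
  move=> x x' e; have : kernel_of B (x - x') by rewrite /kernel_of (linB lB) e subrr.
  move/rQ2 => [z hz].
  have hd : Q2 (x - x') = x - x' by rewrite -hz idQ2.
  apply/eqP; rewrite -subr_eq0; apply/eqP.
  by rewrite grp2 -(linB lQ2) hd subrr.
pose C y := f y - Q2 (f y).
have BC : forall y, B (C y) = Q1 y by move=> y; rewrite /C (linB lB) BQ2 subr0; case: (hf y).
have CB : forall x, C (B x) = x - Q2 x.
  by move=> x; apply: uniq; case: (hf (B x)) => -> _; exact: Q1B.
have lC : lin C.
  move=> a y z; rewrite /C.
  have -> : f (a *: y + z) - Q2 (f (a *: y + z)) = (a *: f y + f z) - Q2 (a *: f y + f z).
    apply: uniq; rewrite (linD lB) (linZ lB).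
    have [e1 _] := hf (a *: y + z); have [e2 _] := hf y; have [e3 _] := hf z.
    by rewrite e1 e2 e3 (linD lQ1) (linZ lQ1).
  by rewrite (linD lQ2) (linZ lQ2) scalerBr opprD addrACA.
exists C; split.
- apply: (bounded_of_nn hH lC); exists ((1 + K2) * (K * K1)); split.
    by rewrite !mulr_ge0 // addr_ge0.
  move=> y; rewrite /C; apply: le_trans (nn_subr hH _ _) _.
  have [_ h1] := hf y; have h2 := hK2 (f y); have h3 := hK1 y.
  have h4 : K * nn ip (Q1 y) <= K * (K1 * nn ip y) by apply: ler_wpM2l.
  have h5 := nn_ge0 ip (f y).
  have : K2 * nn ip (f y) <= K2 * (K * (K1 * nn ip y)).
    apply: ler_wpM2l => //; exact: le_trans h1 h4.
  have -> : (1 + K2) * (K * K1) * nn ip y = K * (K1 * nn ip y) + K2 * (K * (K1 * nn ip y)) by ring.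
  lra.
- by move=> x; rewrite CB (linB lB) BQ2 subr0.
- move=> y; rewrite BC; apply: uniq.
  by case: (hf (Q1 y)) => -> _; rewrite idQ1; case: (hf y).
- by move=> x y /=; rewrite !BC; apply: adjQ1.
- move=> x y /=; rewrite !CB (linB lA2) (ipBl hH) (ipBr hH); congr (_ - _).
  exact: adjQ2 x y.
Qed.
End Main.

Unset Implicit Arguments.

Theorem mainTheorem19 (R : realType) (V : lmodType R[i]) (ip : V -> V -> R[i])
  (hH : is_hilbert ip) (hsep : separable ip)
  (A1 A2 B : V -> V)
  (hA1 : positive_op ip A1) (hA2 : positive_op ip A2)
  (hB : bounded_op ip B) (hBcl : closed_range ip B) :
  [<->
    (exists G : V -> V, [/\ bounded_op ip G,
        Pi ip A1 (range_of B) (B \o G) &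
        Pi ip A2 (kernel_of B) (fun x => x - G (B x))]);
    (compatible ip A1 (range_of B) /\ compatible ip A2 (kernel_of B));
    (exists C : V -> V, [/\ bounded_op ip C,
        (forall x, B (C (B x)) = B x),
        (forall x, C (B (C x)) = C x),
        eq_adj_comp ip (A1 \o (B \o C)) (B \o C) A1 &
        eq_adj_comp ip (A2 \o (C \o B)) (C \o B) A2])].
Proof.
tfae=> h.
- exact: (L32 hH hA2 hB (L13 hH hA1 hA2 hB h)).
- exact: (L23 hH hA2 hB hBcl h).
- exact: (L31 hH hA1 hA2 hB h).
Qed.
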